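(* Let $k$ be a field of characteristic $p>0$, let $R$ be a smooth $k$-algebra, let $e\in\mathbb N_{>0}$ and $m\in\mathbb N_{>0}$, and let $\mathbb D=(D_{\mathbf i})_{\mathbf i\in[p^m]^e}$ be an $m$-truncated $e$-dimensional HS-derivation on $R$ over $k$. Then there exists an $e$-dimensional HS-derivation $\mathbb D'=(D'_{\mathbf i})_{\mathbf i\in\mathbb N^e}$ on $R$ over $k$ such that $D'_{\mathbf i}=D_{\mathbf i}$ for every $\mathbf i\in[p^m]^e$.
   Context: All rings are commutative with $1$. For $m\in\mathbb N_{>0}\cup\{\infty\}$ and a $k$-algebra $R$ put $R[\bar v]:=R[X_1,\dots,X_e]/(X_1^{p^m},\dots,X_e^{p^m})$, with $v_i$ the image of $X_i$ (for $m=\infty$, $R[\bar v]:=R[[X_1,\dots,X_e]]$ and $v_i=X_i$). Let $[p^m]=\{0,1,\dots,p^m-1\}$ (and $[p^\infty]=\mathbb N$); for $\mathbf i=(i_1,\dots,i_e)$ write $\bar v^{\mathbf i}=v_1^{i_1}\cdots v_e^{i_e}$. An $m$-truncated $e$-dimensional HS-derivation on $R$ over $k$ is a family $\mathbb D=(D_{\mathbf i}:R\to R)_{\mathbf i\in[p^m]^e}$ such that the map $R\to R[\bar v]$, $r\mapsto\sum_{\mathbf i}D_{\mathbf i}(r)\bar v^{\mathbf i}$, is a $k$-algebra homomorphism and $D_{\mathbf 0}=\mathrm{id}_R$. For $m=\infty$ this is called an $e$-dimensional HS-derivation. *)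

(* Defs.v *)
From HB Require Import structures.
From mathcomp Require Import all_boot all_order all_algebra.
Set Implicit Arguments. Unset Strict Implicit. Unset Printing Implicit Defensive.
Import Order.TTheory GRing.Theory Num.Theory.
Local Open Scope ring_scope.

Definition mindex (e : nat) := {ffun 'I_e -> nat}.

Definition mzero (e : nat) : mindex e := [ffun => 0%N].

Definition in_box (e N : nat) (i : mindex e) : bool := [forall t, (i t < N)%N].

Definition mle (e : nat) (j i : mindex e) : bool := [forall t, (j t <= i t)%N].
Definition msub (e : nat) (i j : mindex e) : mindex e := [ffun t => (i t - j t)%N].

Definition mbound (e : nat) (i : mindex e) : nat := (\max_(t < e) i t).+1.

Definition mval (e n : nat) (j : {ffun 'I_e -> 'I_n}) : mindex e := [ffun t => val (j t)].

(* The coefficient of v^i in (sum_j D_j(r) v^j)(sum_l D_l(s) v^l), i.e.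
   sum over j + l = i of D_j(r) D_l(s) (j ranges over j <= i componentwise). *)
Definition leib_coef (k : fieldType) (R : comAlgType k) (e : nat)
    (D : mindex e -> R -> R) (i : mindex e) (r s : R) : R :=
  \sum_(j : {ffun 'I_e -> 'I_(mbound i)} | mle (mval j) i)
     D (mval j) r * D (msub i (mval j)) s.

(* The family (D_i)_{i in P} defines a k-algebra homomorphism
   R -> R[bar v], r |-> sum_i D_i(r) v^i, with D_0 = id, written out
   coefficientwise: k-linearity, preservation of 1, preservation of products
   (coefficient of v^i of a product), and D_0 = id.
   For P = [p^m]^e the target is R[X]/(X_1^{p^m},...,X_e^{p^m});
   for P = N^e the target is R[[X_1,...,X_e]]. *)
Definition HS_family (k : fieldType) (R : comAlgType k) (e : nat)
    (P : pred (mindex e)) (D : mindex e -> R -> R) : Prop :=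
  [/\ forall i, P i -> forall (a : k) (r s : R), D i (a *: r + s) = a *: D i r + D i s,
      forall i, P i -> D i 1 = (i == mzero e)%:R,
      forall i, P i -> forall r s : R, D i (r * s) = leib_coef D i r s
    & forall r, D (mzero e) r = r].

Definition trunc_HS_derivation (k : fieldType) (R : comAlgType k) (p e m : nat)
    (D : mindex e -> R -> R) : Prop :=
  HS_family (in_box (p ^ m)) D.

Definition HS_derivation (k : fieldType) (R : comAlgType k) (e : nat)
    (D : mindex e -> R -> R) : Prop :=
  HS_family predT D.

Definition finite_type_alg (k : fieldType) (R : comAlgType k) : Prop :=
  exists (n : nat) (g : 'I_n -> R),
    forall S : R -> Prop,
      S 1 ->
      (forall (a : k) x y, S x -> S y -> S (a *: x + y)) ->
      (forall x y, S x -> S y -> S (x * y)) ->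
      (forall t, S (g t)) ->
      forall r, S r.

Definition formally_smooth (k : fieldType) (R : comAlgType k) : Prop :=
  forall (A B : comAlgType k) (pi : {lrmorphism A -> B}),
    (forall b : B, exists a : A, pi a = b) ->
    (forall x y : A, pi x = 0 -> pi y = 0 -> x * y = 0) ->
    forall f : {lrmorphism R -> B},
      exists g : {lrmorphism R -> A}, forall r : R, pi (g r) = f r.

(* Smooth k-algebra. Over a field (Noetherian) finite type = finite presentation,
   so smooth = finite type + formally smooth. *)
Definition smooth_alg (k : fieldType) (R : comAlgType k) : Prop :=
  finite_type_alg R /\ formally_smooth R.

(* Main.v *)
Require Import Defs.
From HB Require Import structures.
From mathcomp Require Import all_boot all_order all_algebra.
From mathcomp Require Import boolp zify.
Set Implicit Arguments. Unset Strict Implicit. Unset Printing Implicit Defensive.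
Import Order.TTheory GRing.Theory Num.Theory.
Local Open Scope ring_scope.

Section Box.
Variables (k : fieldType) (R : comAlgType k) (e : nat).


Definition bw (B : nat) (j : mindex e) : {ffun 'I_e -> 'I_B.+1} := [ffun t => inord (j t)].

Lemma mval_bw B (j : mindex e) : (forall t, (j t <= B)%N) -> mval (bw B j) = j.
Proof. by move=> hj; apply/ffunP => t; rewrite !ffunE /= inordK // ltnS. Qed.

Lemma bw_mval B (j : {ffun 'I_e -> 'I_B.+1}) : bw B (mval j) = j.
Proof. by apply/ffunP => t; rewrite !ffunE; apply: val_inj; rewrite /= inordK. Qed.

Definition bsum (B : nat) (P : pred (mindex e)) (F : mindex e -> R) :=
  \sum_(j : {ffun 'I_e -> 'I_B.+1} | P (mval j)) F (mval j).

Lemma bsum_bij B B' (P P' : pred (mindex e)) F (phi psi : mindex e -> mindex e) :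
  (forall j, P j -> forall t, (j t <= B)%N) ->
  (forall j, P' j -> forall t, (j t <= B')%N) ->
  (forall j, P' j -> P (phi j)) -> (forall j, P j -> P' (psi j)) ->
  (forall j, P' j -> psi (phi j) = j) -> (forall j, P j -> phi (psi j) = j) ->
  bsum B P F = bsum B' P' (fun j => F (phi j)).
Proof.
move=> hB hB' hP hP' hpp hpp'; rewrite /bsum.
rewrite (reindex_onto (fun j : {ffun 'I_e -> 'I_B'.+1} => bw B (phi (mval j)))
                      (fun j => bw B' (psi (mval j)))) /=; last first.
  move=> j Pj; rewrite mval_bw; last by move=> t; apply: hB'; apply: hP'.
  by rewrite hpp' // bw_mval.
have key : forall j : {ffun 'I_e -> 'I_B'.+1},
    P (mval (bw B (phi (mval j)))) && (bw B' (psi (mval (bw B (phi (mval j))))) == j) = P' (mval j).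
  move=> j; apply/idP/idP.
    case/andP => Pj /eqP hj.
    by rewrite -hj mval_bw; [apply: hP' | apply: hB'; apply: hP'].
  move=> Pj; have Pp := hP _ Pj.
  rewrite mval_bw; last exact: hB.
  by rewrite Pp hpp // bw_mval eqxx.
apply: eq_big => [j|j]; first exact: key.
rewrite key => Pj; rewrite mval_bw //; apply: hB; exact: hP.
Qed.

Implicit Types i j l : mindex e.
Lemma mleP (j i : mindex e) : reflect (forall t, (j t <= i t)%N) (mle j i).
Proof. exact: forallP. Qed.

Definition mmax (i : mindex e) := (\max_(t < e) i t)%N.
Definition madd (j l : mindex e) : mindex e := [ffun t => (j t + l t)%N].

Lemma mle_bound j i : mle j i -> forall t, (j t <= mmax i)%N.
Proof. move/mleP=> h t; apply: leq_trans (h t) _; exact: (leq_bigmax t). Qed.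

Lemma mle_refl i : mle i i. Proof. by apply/mleP. Qed.
Lemma mle_trans i j l : mle l j -> mle j i -> mle l i.
Proof. by move=> /mleP h1 /mleP h2; apply/mleP => t; apply: leq_trans (h1 t) (h2 t). Qed.
Lemma msub_le i j : mle (msub i j) i.
Proof. by apply/mleP => t; rewrite ffunE leq_subr. Qed.
Lemma msubK i j : mle j i -> msub i (msub i j) = j.
Proof. by move/mleP=> h; apply/ffunP => t; rewrite !ffunE subKn. Qed.
Lemma msub0 i : msub i (mzero e) = i.
Proof. by apply/ffunP => t; rewrite !ffunE subn0. Qed.

Definition sle (i : mindex e) (F : mindex e -> R) := bsum (mmax i) (fun j => mle j i) F.

Lemma sle_eq i F G : (forall j, mle j i -> F j = G j) -> sle i F = sle i G.
Proof. by move=> h; apply: eq_bigr => j /h. Qed.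

Lemma sle_widen B i F : (forall t, (i t <= B)%N) -> sle i F = bsum B (fun j => mle j i) F.
Proof.
move=> hB; rewrite /sle (@bsum_bij _ B _ (fun j => mle j i) F id id) //.
- by move=> j hj; apply: mle_bound.
- by move=> j /mleP hj t; apply: leq_trans (hj t) (hB t).
Qed.

Definition conv (f g : mindex e -> R) (i : mindex e) := sle i (fun j => f j * g (msub i j)).

Lemma conv_comm f g i : conv f g i = conv g f i.
Proof.
rewrite /conv /sle (@bsum_bij _ (mmax i) _ (fun j => mle j i) _ (msub i) (msub i)) //.
- by apply: eq_bigr => j hj; rewrite msubK // mulrC.
- by move=> j hj; apply: mle_bound.
- by move=> j hj; apply: mle_bound.
- by move=> j _; apply: msub_le.
- by move=> j _; apply: msub_le.
- by move=> j; apply: msubK.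
- by move=> j; apply: msubK.
Qed.

Lemma conv_one f i : conv (fun j => (j == mzero e)%:R) f i = f i.
Proof.
rewrite /conv /sle /bsum (bigD1 (bw (mmax i) (mzero e))) /=; last first.
  have hz : mval (bw (mmax i) (mzero e)) = mzero e by rewrite mval_bw // => t; rewrite ffunE.
  by rewrite hz; apply/mleP => t; rewrite ffunE.
rewrite mval_bw; last by move=> t; rewrite ffunE.
rewrite eqxx mul1r msub0 big1 ?addr0 // => j /andP [_ hj].
suff /negbTE -> : mval j != mzero e by rewrite mul0r.
apply: contra hj => /eqP <-; by rewrite bw_mval.
Qed.

Lemma conv_addl f1 f2 g i : conv (fun j => f1 j + f2 j) g i = conv f1 g i + conv f2 g i.
Proof. by rewrite /conv /sle /bsum -big_split; apply: eq_bigr => j _; rewrite mulrDl. Qed.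

Lemma conv_scalel (a : k) f g i : conv (fun j => a *: f j) g i = a *: conv f g i.
Proof. by rewrite /conv /sle /bsum scaler_sumr; apply: eq_bigr => j _; rewrite scalerAl. Qed.


Lemma conv_assoc f g h i :
  conv (fun j => conv f g j) h i = conv f (fun j => conv g h j) i.
Proof.
set M := mmax i.
have hM : forall t, (i t <= M)%N by move=> t; apply: mle_bound (mle_refl i) t.
rewrite /conv [LHS](sle_widen _ hM) [RHS](sle_widen _ hM).
have -> : bsum M (fun j => mle j i) (fun j => sle j (fun l => f l * g (msub j l)) * h (msub i j))
   = bsum M (fun j => mle j i) (fun j => bsum M (fun l => mle l j) (fun l => f l * g (msub j l) * h (msub i j))).
  apply: eq_bigr => j hj; rewrite (sle_widen _ (mle_bound hj)) /bsum mulr_suml //.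
have -> : bsum M (fun j => mle j i) (fun l => f l * sle (msub i l) (fun j => g j * h (msub (msub i l) j)))
   = bsum M (fun l => mle l i) (fun l => bsum M (fun j => mle j (msub i l)) (fun j => f l * (g j * h (msub (msub i l) j)))).
  apply: eq_bigr => l hl.
  rewrite (sle_widen _ (mle_bound (msub_le i (mval l)))) /bsum mulr_sumr //.
rewrite /bsum (exchange_big_dep (fun l : {ffun 'I_e -> 'I_M.+1} => mle (mval l) i)) /=; last first.
  by move=> j l hj hl; apply: mle_trans hl hj.
apply: eq_bigr => l hl.
have := (@bsum_bij M M (fun j => mle j i && mle (mval l) j) (fun j => mle j (msub i (mval l)))
  (fun j => f (mval l) * g (msub j (mval l)) * h (msub i j)) (madd (mval l)) (fun j => msub j (mval l))).
rewrite /bsum => ->.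
- apply: eq_bigr => j /mleP hj; rewrite -mulrA; congr (_ * (g _ * h _)).
    by apply/ffunP => t; rewrite !ffunE; lia.
  by apply/ffunP => t; have := hj t; rewrite !ffunE; lia.
- by move=> j /andP[hj _]; apply: mle_bound hj.
- by move=> j hj; apply: mle_bound (mle_trans hj (msub_le _ _)).
- move=> j /mleP hj; apply/andP; split; apply/mleP => t; have := hj t; move/mleP: hl => /(_ t);
    rewrite !ffunE; lia.
- move=> j /andP[/mleP hj /mleP hlj]; apply/mleP => t; have := hj t; have := hlj t;
    rewrite !ffunE; lia.
- by move=> j _; apply/ffunP => t; rewrite !ffunE addKn.
- by move=> j /andP[_ /mleP hlj]; apply/ffunP => t; have := hlj t; rewrite !ffunE => ?; rewrite subnKC.
Qed.

End Box.

Section Trunc.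
Variables (k : fieldType) (R : comAlgType k) (e : nat).
Implicit Types i j l : mindex e.

Record dcl := DCL { dp : pred (mindex e); dp0 : dp (mzero e);
                    dpdown : forall i j, mle j i -> dp i -> dp j }.

Variable S : dcl.

Record trunc := Trunc { tval : mindex e -> R; tvalP : forall i, ~~ dp S i -> tval i = 0 }.
HB.instance Definition _ := gen_eqMixin trunc.
HB.instance Definition _ := gen_choiceMixin trunc.

Lemma tr_ext (a b : trunc) : tval a =1 tval b -> a = b.
Proof.
case: a b => [fa ha] [fb hb] /= /funext E; subst; congr Trunc; exact: Prop_irrelevance.
Qed.

Lemma t0P i : ~~ dp S i -> (0 : R) = 0. Proof. by []. Qed.
Definition t0 := Trunc t0P.
Lemma t_addP a b i : ~~ dp S i -> tval a i + tval b i = 0.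
Proof. by move=> h; rewrite !tvalP // addr0. Qed.
Definition t_add a b := Trunc (t_addP a b).
Lemma t_oppP a i : ~~ dp S i -> - tval a i = 0.
Proof. by move=> h; rewrite tvalP // oppr0. Qed.
Definition t_opp a := Trunc (t_oppP a).
Lemma t_oneP i : ~~ dp S i -> ((i == mzero e)%:R : R) = 0.
Proof. by move=> h; case: eqP => // E; move: h; rewrite E dp0. Qed.
Definition t_one := Trunc t_oneP.
Lemma t_mulP a b i : ~~ dp S i -> (if dp S i then conv (tval a) (tval b) i else 0) = 0.
Proof. by move/negbTE => ->. Qed.
Definition t_mul a b := Trunc (t_mulP a b).
Lemma t_scaleP (c : k) a i : ~~ dp S i -> c *: tval a i = 0.
Proof. by move=> h; rewrite tvalP // scaler0. Qed.
Definition t_scale c a := Trunc (t_scaleP c a).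

Lemma t_addA : associative t_add.
Proof. by move=> a b c; apply: tr_ext => i /=; rewrite addrA. Qed.
Lemma t_addC : commutative t_add.
Proof. by move=> a b; apply: tr_ext => i /=; rewrite addrC. Qed.
Lemma t_add0 : left_id t0 t_add.
Proof. by move=> a; apply: tr_ext => i /=; rewrite add0r. Qed.
Lemma t_addN : left_inverse t0 t_opp t_add.
Proof. by move=> a; apply: tr_ext => i /=; rewrite addNr. Qed.

HB.instance Definition _ := GRing.isZmodule.Build trunc t_addA t_addC t_add0 t_addN.

Lemma conv_ifl i (F G : mindex e -> R) : dp S i ->
  conv (fun j => if dp S j then F j else 0) G i = conv F G i.
Proof.
move=> Si; apply: sle_eq => j hj; by rewrite (dpdown hj Si).
Qed.
Lemma conv_ifr i (F G : mindex e -> R) : dp S i ->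
  conv F (fun j => if dp S j then G j else 0) i = conv F G i.
Proof.
move=> Si; apply: sle_eq => j hj; by rewrite (dpdown (msub_le i j) Si).
Qed.

Lemma t_mulA : associative t_mul.
Proof.
move=> a b c; apply: tr_ext => i /=; case: ifP => // Si.
by rewrite conv_ifl // conv_ifr // conv_assoc.
Qed.
Lemma t_mulC : commutative t_mul.
Proof. by move=> a b; apply: tr_ext => i /=; rewrite conv_comm. Qed.
Lemma t_mul1 : left_id t_one t_mul.
Proof.
move=> a; apply: tr_ext => i /=; rewrite conv_one; case: ifP => // /negbT.
by move/tvalP.
Qed.
Lemma t_mulDl : left_distributive t_mul t_add.
Proof.
move=> a b c; apply: tr_ext => i /=; case: ifP => _; last by rewrite addr0.
by rewrite conv_addl.
Qed.
Lemma t_one_neq0 : t_one != t0.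
Proof.
apply/eqP => h; have := congr1 (fun x => tval x (mzero e)) h => /=.
by rewrite eqxx; apply/eqP; rewrite oner_neq0.
Qed.

HB.instance Definition _ := GRing.Zmodule_isComNzRing.Build trunc
  t_mulA t_mulC t_mul1 t_mulDl t_one_neq0.

Lemma t_scaleA c1 c2 a : t_scale c1 (t_scale c2 a) = t_scale (c1 * c2) a.
Proof. by apply: tr_ext => i /=; rewrite scalerA. Qed.
Lemma t_scale1 : left_id 1 t_scale.
Proof. by move=> a; apply: tr_ext => i /=; rewrite scale1r. Qed.
Lemma t_scaleDr : right_distributive t_scale +%R.
Proof. by move=> c a b; apply: tr_ext => i /=; rewrite scalerDr. Qed.
Lemma t_scaleDl a : {morph t_scale^~ a : c1 c2 / c1 + c2}.
Proof. by move=> c1 c2; apply: tr_ext => i /=; rewrite scalerDl. Qed.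

HB.instance Definition _ := GRing.Zmodule_isLmodule.Build k trunc
  t_scaleA t_scale1 t_scaleDr t_scaleDl.

Lemma t_scaleAl (c : k) (u v : trunc) : c *: (u * v) = (c *: u) * v.
Proof.
apply: tr_ext => i /=; case: ifP => _; last by rewrite scaler0.
by rewrite conv_scalel.
Qed.

HB.instance Definition _ := GRing.Lmodule_isLalgebra.Build k trunc t_scaleAl.
HB.instance Definition _ := GRing.Lalgebra_isComAlgebra.Build k trunc.

End Trunc.

Section Main.
Variables (k : fieldType) (R : comAlgType k) (e N : nat).
Implicit Types i j l : mindex e.

Definition deg i := (\sum_(t < e) i t)%N.
Definition Sp n : pred (mindex e) := fun i => in_box N.+1 i || (deg i < n)%N.

Lemma Sp0 n : Sp n (mzero e).
Proof. by rewrite /Sp; apply/orP; left; apply/forallP => t; rewrite ffunE. Qed.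

Lemma Spdown n i j : mle j i -> Sp n i -> Sp n j.
Proof.
move=> /mleP hji /orP[/forallP hb | hd]; apply/orP.
  by left; apply/forallP => t; apply: leq_ltn_trans (hji t) (hb t).
by right; apply: leq_ltn_trans hd; apply: leq_sum => t _; apply: hji.
Qed.

Definition Sd n := DCL (Sp0 n) (@Spdown n).
Notation T n := (trunc R (Sd n)).

Lemma Sp_succ n i : Sp n i -> Sp n.+1 i.
Proof. by case/orP => h; apply/orP; [left | right; apply: ltnW]. Qed.

Lemma deg_split i j : mle j i -> deg i = (deg j + deg (msub i j))%N.
Proof.
move/mleP => h; rewrite /deg -big_split; apply: eq_bigr => t _.
by rewrite ffunE; apply/esym/subnKC.
Qed.

Section Proj.
Variable n : nat.
Lemma tprojP (a : T n.+1) i : ~~ Sp n i -> (if Sp n i then tval a i else 0) = 0.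
Proof. by move/negbTE => ->. Qed.
Definition tproj (a : T n.+1) : T n := @Trunc _ _ _ (Sd n) _ (tprojP a).

Lemma tproj_zmod : zmod_morphism tproj.
Proof. by move=> a b; apply: tr_ext => i /=; case: ifP => //; rewrite subrr. Qed.
Lemma tproj_monoid : monoid_morphism tproj.
Proof.
split.
  apply: tr_ext => i /=; case: ifP => // /negbT h.
  by move: h; case: eqP => // ->; rewrite Sp0.
move=> a b; apply: tr_ext => i /=; case: ifP => // Si.
rewrite (Sp_succ Si) -(conv_ifl (S := Sd n)) //.
by rewrite -(conv_ifr (S := Sd n)).
Qed.
Lemma tproj_scale : scalable tproj.
Proof. by move=> c a; apply: tr_ext => i /=; case: ifP => //; rewrite scaler0. Qed.

HB.instance Definition _ := GRing.isZmodMorphism.Build _ _ tproj tproj_zmod.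
HB.instance Definition _ := GRing.isMonoidMorphism.Build _ _ tproj tproj_monoid.
HB.instance Definition _ := GRing.isScalable.Build k _ _ *:%R tproj tproj_scale.

Definition tprojL : {lrmorphism T n.+1 -> T n} := GRing.LRMorphism.clone _ _ _ _ tproj _.

Lemma tproj_surj (b : T n) : exists a : T n.+1, tproj a = b.
Proof.
have P : forall i, ~~ Sp n.+1 i -> tval b i = 0.
  move=> i h; apply: tvalP => /=; apply: contra h; exact: Sp_succ.
exists (@Trunc _ _ _ (Sd n.+1) _ P); apply: tr_ext => i /=.
by case: ifP => // /negbT /= h; rewrite tvalP.
Qed.

Lemma tproj_sqz (x y : T n.+1) : tproj x = 0 -> tproj y = 0 -> x * y = 0.
Proof.
move=> hx hy.
have hx' : forall i, Sp n i -> tval x i = 0.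
  by move=> i Si; have := congr1 (fun z => tval z i) hx => /=; rewrite Si.
have hy' : forall i, Sp n i -> tval y i = 0.
  by move=> i Si; have := congr1 (fun z => tval z i) hy => /=; rewrite Si.
apply: tr_ext => i /=; case: ifP => // Si.
rewrite /conv /sle /bsum big1 // => j hj.
case Sj: (Sp n (mval j)); first by rewrite hx' // mul0r.
case Sij: (Sp n (msub i (mval j))); first by rewrite hy' // mulr0.
exfalso; move: Sj Sij Si; rewrite /Sp => /negbT; rewrite negb_or => /andP[bj dj].
move=> /negbT; rewrite negb_or => /andP[_ dij] /orP[bi|di].
  apply: (negP bj); apply/forallP => t.
  by apply: leq_ltn_trans ((mleP _ _ hj) t) ((forallP bi) t).
rewrite -leqNgt in dj; rewrite -leqNgt in dij; rewrite (deg_split hj) in di.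
have d0 : deg (mval j) = 0%N by lia.
apply: (negP bj); apply/forallP => t.
have : (mval j t <= deg (mval j))%N by rewrite /deg (bigD1 t) //= leq_addr.
by rewrite d0 leqn0 => /eqP ->.
Qed.
End Proj.


Lemma Sp_mono n n' i : (n <= n')%N -> Sp n i -> Sp n' i.
Proof. by move=> hn /orP[h|h]; apply/orP; [left | right; apply: leq_trans hn]. Qed.

Section F0.
Variables (D : mindex e -> R -> R) (hD : HS_family (in_box N.+1) D).

Lemma Sp_0 i : Sp 0 i = in_box N.+1 i.
Proof. by rewrite /Sp orbF. Qed.

Lemma F0P r i : ~~ Sp 0 i -> (if Sp 0 i then D i r else 0) = 0.
Proof. by move/negbTE => ->. Qed.
Definition F0 (r : R) : T 0 := @Trunc _ _ _ (Sd 0) _ (F0P r).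

Lemma D_0 i : in_box N.+1 i -> D i 0 = 0.
Proof.
case: hD => hlin _ _ _ hb; have := hlin i hb 1 0 0; rewrite !scale1r addr0 => H.
by apply: (@addrI _ (D i 0)); rewrite addr0 -H.
Qed.

Lemma F0_zmod : zmod_morphism F0.
Proof.
case: hD => hlin _ _ _.
move=> a b; apply: tr_ext => i /=; case: ifP => Si; last by rewrite subrr.
rewrite Sp_0 in Si; have := hlin i Si (-1) b a.
by rewrite !scaleN1r addrC => ->; rewrite addrC.
Qed.
Lemma F0_scale : scalable F0.
Proof.
case: hD => hlin _ _ _.
move=> c a; apply: tr_ext => i /=; case: ifP => Si; last by rewrite scaler0.
rewrite Sp_0 in Si; have := hlin i Si c a 0.
by rewrite addr0 => ->; rewrite D_0 // addr0.
Qed.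
Lemma F0_monoid : monoid_morphism F0.
Proof.
case: hD => _ h1 hmul _; split.
  apply: tr_ext => i /=; case: ifP => Si; first by rewrite h1 // -Sp_0.
  by move: Si; case: eqP => // ->; rewrite Sp0.
move=> a b; apply: tr_ext => i /=; case: ifP => // Si.
rewrite (conv_ifl (S := Sd 0)) // (conv_ifr (S := Sd 0)) //.
rewrite hmul -?Sp_0 //.
Qed.

HB.instance Definition _ := GRing.isZmodMorphism.Build _ _ F0 F0_zmod.
HB.instance Definition _ := GRing.isMonoidMorphism.Build _ _ F0 F0_monoid.
HB.instance Definition _ := GRing.isScalable.Build k _ _ *:%R F0 F0_scale.

Definition F0L : {lrmorphism R -> T 0} := GRing.LRMorphism.clone _ _ _ _ F0 _.

Variable hsm : formally_smooth R.

Lemma lift_step n (f : {lrmorphism R -> T n}) :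
  exists g : {lrmorphism R -> T n.+1}, forall r, tprojL n (g r) = f r.
Proof. exact: (@hsm _ _ (tprojL n) (@tproj_surj n) (@tproj_sqz n) f). Qed.

Fixpoint Fs n : {lrmorphism R -> T n} :=
  match n with
  | 0 => F0L
  | n'.+1 => proj1_sig (cid (lift_step (Fs n')))
  end.

Lemma Fs_coef n r i : Sp n i -> tval (Fs n.+1 r) i = tval (Fs n r) i.
Proof.
move=> Si; have := congr1 (fun z => tval z i) (proj2_sig (cid (lift_step (Fs n))) r).
by rewrite /= Si.
Qed.

Lemma Fs_mono n n' r i : (n <= n')%N -> Sp n i -> tval (Fs n' r) i = tval (Fs n r) i.
Proof.
move=> /subnKC <- Si; elim: (n' - n)%N => [|d IH]; first by rewrite addn0.
by rewrite addnS Fs_coef // (Sp_mono _ Si) // leq_addr.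
Qed.

Definition D' (i : mindex e) (r : R) : R := tval (Fs (deg i).+1 r) i.

Lemma Sp_deg i : Sp (deg i).+1 i.
Proof. by apply/orP; right. Qed.

Lemma D'_HS : HS_derivation D'.
Proof.
split.
- move=> i _ a r s; rewrite /D' linearP /=. done.
- by move=> i _; rewrite /D' rmorph1 /=.
- move=> i _ r s.
  transitivity (conv (fun j => D' j r) (fun j => D' j s) i); last by [].
  rewrite {1}/D' rmorphM /= Sp_deg.
  apply: sle_eq => j hj; rewrite /D'.
  rewrite (Fs_mono _ _ (Sp_deg j)); last by rewrite ltnS (deg_split hj) leq_addr.
  rewrite (Fs_mono _ _ (Sp_deg (msub i j))) //.
  by rewrite ltnS (deg_split hj) leq_addl.
- move=> r; have d0 : deg (mzero e) = 0%N by rewrite /deg big1 // => t _; rewrite ffunE.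
  rewrite /D' d0 Fs_coef; last exact: Sp0.
  by case: hD => _ _ _ h0 /=; rewrite Sp0.
Qed.

Lemma D'_ext i : in_box N.+1 i -> D' i = D i.
Proof.
move=> hb; apply: funext => r; rewrite /D' (Fs_mono (n := 0)) //; last by rewrite Sp_0.
by rewrite /= Sp_0 hb.
Qed.
End F0.
End Main.

Theorem theorem2p3 (k : fieldType) (p : nat) (hp : p \in [pchar k])
    (R : comAlgType k) (hR : smooth_alg R) (e m : nat) (he : (0 < e)%N) (hm : (0 < m)%N)
    (D : mindex e -> R -> R) (hD : trunc_HS_derivation p m D) :
  exists D' : mindex e -> R -> R,
    HS_derivation D' /\ (forall i : mindex e, in_box (p ^ m) i -> D' i = D i).
Proof.
have hp0 : (0 < p ^ m)%N by rewrite expn_gt0 prime_gt0 // (pcharf_prime hp).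
have hN : (p ^ m = (p ^ m).-1.+1)%N by rewrite prednK.
move: hD; rewrite /trunc_HS_derivation hN => hD.
exists (@D' k R e (p ^ m).-1 D hD hR.2); split.
  exact: D'_HS.
by move=> i hi; apply: D'_ext.
Qed.
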